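(* Let $S$ be training data, $\mathrm{NN}(\{m_l\}_{l=0}^L)$ a fully-connected network, and $\mathcal T_S$ a one-layer lifting to a one-layer deeper $\mathrm{NN}'$. If a parameter $\theta_{\mathrm{shal}}$ of $\mathrm{NN}$ satisfies $\nabla_\theta R_S(\theta_{\mathrm{shal}})=0$, then $\nabla_{\theta'}R_S(\theta'_{\mathrm{deep}})=0$ for every $\theta'_{\mathrm{deep}}\in\mathcal T_S(\theta_{\mathrm{shal}})$.
   Context: $\sigma$ has a non-constant linear segment; $\sigma$ and $\ell(\cdot,y)$ are assigned fixed (sub)derivatives $\sigma'$, $\nabla\ell$ (gradient in first argument) at every point, agreeing with classical derivatives wherever these exist. Network: $\theta=(W^{[1]},b^{[1]},\dots,W^{[L]},b^{[L]})$, $W^{[l]}\in\mathbb R^{m_l\times m_{l-1}}$, $\theta|_l=(W^{[l]},b^{[l]})$; $f^{[0]}_\theta(x)=x$, $f^{[l]}_\theta=\sigma(W^{[l]}f^{[l-1]}_\theta+b^{[l]})$ for hidden $l$, $f_\theta=f^{[L]}_\theta=W^{[L]}f^{[L-1]}_\theta+b^{[L]}$. Data $S=\{(x_i,y_i)\}_{i=1}^n$, $S_x=\{x_i\}$, $\mathbb E_S h=\frac1n\sum_i h(x_i,y_i)$, $R_S(\theta)=\mathbb E_S\ell(f_\theta(x),y)$. Gradient (for any layered network, with ''predecessor/successor'' following the layer order): $g^{[L]}_\theta=\mathbf 1$, $g^{[l]}_\theta(x)=\sigma'(W^{[l]}f^{[l^-]}_\theta(x)+b^{[l]})$ for hidden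 $l$; $z^{[L]}_\theta(x)=\nabla\ell(f_\theta(x),y)$, $z^{[l]}_\theta=(W^{[l^+]})^\top(z^{[l^+]}_\theta\circ g^{[l^+]}_\theta)$ where $l^-,l^+$ are the predecessor and successor of $l$; $\nabla_{W^{[l]}}R_S=\mathbb E_S[(z^{[l]}_\theta\circ g^{[l]}_\theta)(f^{[l^-]}_\theta)^\top]$, $\nabla_{b^{[l]}}R_S=\mathbb E_S[z^{[l]}_\theta\circ g^{[l]}_\theta]$; $\nabla_\theta R_S(\theta)=0$ means all these vanish. Affine subdomain: open interval $(a,b)$ with $\lambda\ne0,\mu$ such that $\sigma(x)=\lambda x+\mu$ on $(a,b)$. One-layer deeper: $\mathrm{NN}'$ with layers $0,1,\dots,q,\hat q,q+1,\dots,L$ ($q\in\{0,\dots,L-1\}$, $\hat q$ a new hidden layer with activation $\sigma$), $m'_l=m_l$ for $l\ne\hat q$, $m'_{\hat q}\ge\min\{m_q,m_{q+1}\}$. One-layer lifting: $\mathcal T_S(\theta)$ is the set of $\theta'$ with (i) $\theta'|_l=\theta|_l$ for $l\in[q]\cup[q+2:L]$, $(W'^{[\hat q]},b'^{[\hat q]})\in\mathbb R^{m'_{\hat q}\times m_q}\times\mathbb R^{m'_{\hat q}}$, $(W'^{[q+1]},b'^{[q+1]})\in\mathbb R^{m_{q+1}\times m'_{\hat q}}\times\mathbb R^{m_{q+1}}$; (ii) for each $j\in[m'_{\hat q}]$ an affine subdomain $(a_j,b_j)$ with constants $\lambda_j,\mu_j$ such that $(W'^{[\hat q]}f^{[q]}_{\theta'}(x)+b'^{[\hat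 q]})_j\in(a_j,b_j)$ for all $x\in S_x$; (iii) $W'^{[q+1]}\mathrm{diag}(\lambda)W'^{[\hat q]}=W^{[q+1]}$ and $W'^{[q+1]}\mathrm{diag}(\lambda)b'^{[\hat q]}+W'^{[q+1]}\mu+b'^{[q+1]}=b^{[q+1]}$, with $\lambda=(\lambda_j)$, $\mu=(\mu_j)$. *)

(* Defs.v *)
From HB Require Import structures.
From mathcomp Require Import all_boot all_order all_algebra.
From mathcomp Require Import all_classical all_reals all_analysis.
Set Implicit Arguments. Unset Strict Implicit. Unset Printing Implicit Defensive.
Import Order.TTheory GRing.Theory Num.Theory.
Import numFieldNormedType.Exports.
Local Open Scope ring_scope.

(* Parameters of a layered fully-connected network, stored nat-indexed:
   Wt l i j = (W^[l])_{ij}, bs l i = (b^[l])_i. Only the entries with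
   1 <= l <= L, i < m l, j < m (l-1) are meaningful. *)
Record netparam (R : Type) := NetParam {
  Wt : nat -> nat -> nat -> R;
  bs : nat -> nat -> R }.

(* i-th coordinate of a column vector (0 outside range). *)
Definition vget (R : ringType) (n : nat) (v : 'cV[R]_n) (i : nat) : R :=
  \sum_(j < n | val j == i) v j 0.

Section Net.
Variables (R : realType) (Y : Type) (sigma sigma' : R -> R).
Variables (nout : nat) (dell : 'cV[R]_nout -> Y -> 'cV[R]_nout).
Variables (L : nat) (m : nat -> nat) (th : netparam R).

Fixpoint fwd (x : nat -> R) (l : nat) : nat -> R :=
  match l with
  | 0 => x
  | k.+1 => fun i =>
      let a := \sum_(j < m k) Wt th k.+1 i j * fwd x k j + bs th k.+1 i in
      if k.+1 == L then a else sigma a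
  end.

Definition pre (x : nat -> R) (l i : nat) : R :=
  \sum_(j < m l.-1) Wt th l i j * fwd x l.-1 j + bs th l i.

Definition gact (x : nat -> R) (l i : nat) : R :=
  if l == L then 1 else sigma' (pre x l i).

Definition out (x : nat -> R) : 'cV[R]_nout := \col_(i < nout) fwd x L i.

(* zrec x y k = z^[L-k]_theta(x) *)
Fixpoint zrec (x : nat -> R) (y : Y) (k : nat) : nat -> R :=
  match k with
  | 0 => fun i => vget (dell (out x) y) i
  | k'.+1 => fun i =>
      \sum_(j < m (L - k')) Wt th (L - k') j i * (zrec x y k' j * gact x (L - k') j)
  end.

Definition zb (x : nat -> R) (y : Y) (l : nat) : nat -> R := zrec x y (L - l).

Variables (n0 N : nat) (xs : 'I_N -> 'cV[R]_n0) (ys : 'I_N -> Y).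


Definition ES' (h : 'I_N -> R) : R := (N%:R)^-1 * \sum_(k < N) h k.

Definition gradW (l i j : nat) : R :=
  ES' (fun k => let x := vget (xs k) in
     zb x (ys k) l i * gact x l i * fwd x l.-1 j).

Definition gradb (l i : nat) : R :=
  ES' (fun k => let x := vget (xs k) in zb x (ys k) l i * gact x l i).

Definition critical : Prop :=
  forall l, (0 < l <= L)%N ->
    (forall i j, (i < m l)%N -> (j < m l.-1)%N -> gradW l i j = 0) /\
    (forall i, (i < m l)%N -> gradb l i = 0).

End Net.

Definition affine_subdomain (R : realType) (sigma : R -> R) (a b lam mu : R) : Prop :=
  a < b /\ lam != 0 /\ forall t, a < t < b -> sigma t = lam * t + mu.

(* widths of the one-layer deeper network NN': layers 0..q, qhat, q+1..L
   are renumbered 0..q, q+1, q+2..L+1; qhat has width mh. *)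
Definition deep_widths (m : nat -> nat) (q mh : nat) (l : nat) : nat :=
  if (l <= q)%N then m l else if l == q.+1 then mh else m l.-1.

(* th' is in the one-layer lifting T_S(th) (deep layer q+1 = qhat,
   deep layer l+1 = original layer l for l >= q+1). *)
Definition one_layer_lifting (R : realType) (sigma : R -> R)
    (L : nat) (m : nat -> nat) (q mh : nat)
    (n0 N : nat) (xs : 'I_N -> 'cV[R]_n0)
    (th th' : netparam R) : Prop :=
  (forall l, (0 < l <= q)%N ->
     (forall i j, (i < m l)%N -> (j < m l.-1)%N -> Wt th' l i j = Wt th l i j) /\
     (forall i, (i < m l)%N -> bs th' l i = bs th l i)) /\
  (forall l, (q.+2 <= l <= L)%N ->
     (forall i j, (i < m l)%N -> (j < m l.-1)%N -> Wt th' l.+1 i j = Wt th l i j) /\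
     (forall i, (i < m l)%N -> bs th' l.+1 i = bs th l i)) /\
  exists lam mu : nat -> R,
    (forall j, (j < mh)%N -> exists a b : R,
       affine_subdomain sigma a b (lam j) (mu j) /\
       forall k : 'I_N,
         a < pre sigma L.+1 (deep_widths m q mh) th' (vget (xs k)) q.+1 j < b) /\
    (forall i j, (i < m q.+1)%N -> (j < m q)%N ->
       \sum_(k < mh) Wt th' q.+2 i k * lam k * Wt th' q.+1 k j = Wt th q.+1 i j) /\
    (forall i, (i < m q.+1)%N ->
       \sum_(k < mh) Wt th' q.+2 i k * (lam k * bs th' q.+1 k + mu k)
         + bs th' q.+2 i = bs th q.+1 i).

(* Main.v *)
Require Import Defs.
From HB Require Import structures.
From mathcomp Require Import all_boot all_order all_algebra.
From mathcomp Require Import all_classical all_reals all_analysis.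
From mathcomp Require Import zify ring lra.
Import Order.TTheory GRing.Theory Num.Theory.
Import numFieldNormedType.Exports.
Local Open Scope ring_scope.

Lemma aff_deriv (R : realType) (sigma sigma' : R -> R) a b lam mu t
  (Hsig' : forall t : R, derivable sigma t 1 -> sigma' t = 'D_1 sigma t) :
  affine_subdomain sigma a b lam mu -> a < t < b -> sigma' t = lam.
Proof.
move=> [_ [_ Hs]] Ht.
have Hn : \forall z \near t, (fun z => lam * z + mu) z = sigma z.
  have : t \in `]a, b[ by rewrite in_itv.
  move/near_in_itvoo; apply: filterS => z; rewrite in_itv /= => Hz.
  by rewrite Hs.
have Hd : is_derive t 1 (fun z : R => lam * z + mu) lam.
  by apply: is_derive_eq; rewrite addr0; exact: mulr1.
have := near_eq_is_derive Hn Hd => Hd'.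
rewrite Hsig'; last exact: ex_derive.
exact: derive_val.
Qed.

Section Proof.
Variables (R : realType) (Y : Type) (sigma sigma' : R -> R) (L : nat) (m : nat -> nat)
  (dell : 'cV[R]_(m L) -> Y -> 'cV[R]_(m L)) (N : nat) (xs : 'I_N -> 'cV[R]_(m 0%N))
  (ys : 'I_N -> Y) (q mh : nat) (th th' : netparam R) (lam mu : nat -> R).
Hypothesis Hq : (q < L)%N.
Local Notation md := (deep_widths m q mh).
Local Notation fS := (fwd sigma L m th).
Local Notation fD := (fwd sigma L.+1 md th').
Local Notation pS := (pre sigma L m th).
Local Notation pD := (pre sigma L.+1 md th').
Local Notation gS := (gact sigma sigma' L m th).
Local Notation gD := (gact sigma sigma' L.+1 md th').
Hypothesis HW1 : forall l i j, (0 < l <= q)%N -> (i < m l)%N -> (j < m l.-1)%N ->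
  Wt th' l i j = Wt th l i j.
Hypothesis Hb1 : forall l i, (0 < l <= q)%N -> (i < m l)%N -> bs th' l i = bs th l i.
Hypothesis HW2 : forall l i j, (q.+2 <= l <= L)%N -> (i < m l)%N -> (j < m l.-1)%N ->
  Wt th' l.+1 i j = Wt th l i j.
Hypothesis Hb2 : forall l i, (q.+2 <= l <= L)%N -> (i < m l)%N -> bs th' l.+1 i = bs th l i.
Hypothesis Haff : forall j, (j < mh)%N -> forall k : 'I_N,
  sigma (pD (vget (xs k)) q.+1 j) = lam j * pD (vget (xs k)) q.+1 j + mu j /\
  sigma' (pD (vget (xs k)) q.+1 j) = lam j.
Hypothesis HW3 : forall i j, (i < m q.+1)%N -> (j < m q)%N ->
  \sum_(k < mh) Wt th' q.+2 i k * lam k * Wt th' q.+1 k j = Wt th q.+1 i j.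
Hypothesis Hb3 : forall i, (i < m q.+1)%N ->
  \sum_(k < mh) Wt th' q.+2 i k * (lam k * bs th' q.+1 k + mu k)
    + bs th' q.+2 i = bs th q.+1 i.

Lemma nF (a b : nat) : a <> b -> (a == b) = false.
Proof. by move/eqP/negbTE. Qed.

Lemma mdle l : (l <= q)%N -> md l = m l.
Proof. by rewrite /deep_widths => ->. Qed.
Lemma mdq1 : md q.+1 = mh.
Proof. by rewrite /deep_widths ltnn eqxx. Qed.
Lemma mdge l : (q.+2 <= l)%N -> md l = m l.-1.
Proof.
move=> H; rewrite /deep_widths ifF; last by apply/negbTE; rewrite -ltnNge; lia.
by rewrite ifF //; apply/eqP; lia.
Qed.

Lemma fwdE (L0 : nat) (m0 : nat -> nat) (t : netparam R) x l i :
  fwd sigma L0 m0 t x l.+1 i =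
  if l.+1 == L0 then pre sigma L0 m0 t x l.+1 i else sigma (pre sigma L0 m0 t x l.+1 i).
Proof. by []. Qed.

Lemma preE (L0 : nat) (m0 : nat -> nat) (t : netparam R) x l i :
  pre sigma L0 m0 t x l.+1 i =
  \sum_(j < m0 l) Wt t l.+1 i j * fwd sigma L0 m0 t x l j + bs t l.+1 i.
Proof. by []. Qed.

Section Fixn.
Variable (n : 'I_N).
Local Notation x := (vget (xs n)).

Lemma F1 k : (k <= q)%N -> forall i, (i < m k)%N -> fD x k i = fS x k i.
Proof.
elim: k => [//|k IH] Hk i Hi.
rewrite !fwdE ifF; last by apply: nF; lia.
rewrite ifF; last by apply: nF; lia.
congr sigma; rewrite /pre /= mdle; last by lia.
rewrite Hb1 //.
congr (_ + _); apply: eq_bigr => j _.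
by rewrite IH ?HW1 //; lia.
Qed.

Lemma pre_low l i : (0 < l <= q)%N -> (i < m l)%N -> pD x l i = pS x l i.
Proof.
move=> Hl Hi; rewrite /pre mdle; last by lia.
rewrite Hb1 //; congr (_ + _); apply: eq_bigr => j _.
rewrite F1 //; last by lia.
by rewrite HW1.
Qed.

Lemma pDq1 j : pD x q.+1 j =
  \sum_(j0 < m q) Wt th' q.+1 j j0 * fS x q j0 + bs th' q.+1 j.
Proof.
rewrite preE mdle //; congr (_ + _); apply: eq_bigr => j0 _.
by rewrite F1.
Qed.

Lemma F2 j : (j < mh)%N -> fD x q.+1 j = lam j * pD x q.+1 j + mu j.
Proof.
move=> Hj; rewrite fwdE ifF; last by apply: nF; lia.
by case: (Haff _ Hj n).
Qed.

Lemma F3 i : (i < m q.+1)%N -> pD x q.+2 i = pS x q.+1 i.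
Proof.
move=> Hi; rewrite preE mdq1.
rewrite (eq_bigr (fun k : 'I_mh => \sum_(j < m q) (Wt th' q.+2 i k * lam k * Wt th' q.+1 k j) * fS x q j
   + Wt th' q.+2 i k * (lam k * bs th' q.+1 k + mu k))); last first.
  move=> k _; rewrite F2 // pDq1.
  have -> : \sum_(j < m q) Wt th' q.+2 i k * lam k * Wt th' q.+1 k j * fS x q j =
    Wt th' q.+2 i k * lam k * \sum_(j < m q) Wt th' q.+1 k j * fS x q j.
    by rewrite mulr_sumr; apply: eq_bigr => j _; ring.
  ring.
rewrite big_split /= exchange_big /= -addrA Hb3 // /pre /=.
congr (_ + _); apply: eq_bigr => j _.
by rewrite -mulr_suml HW3.
Qed.

Lemma pre_step l : (q.+1 <= l < L)%N ->
  (forall j, (j < m l)%N -> fD x l.+1 j = fS x l j) ->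
  forall i, (i < m l.+1)%N -> pD x l.+2 i = pS x l.+1 i.
Proof.
move=> Hl H i Hi; rewrite !preE mdge; last by lia.
rewrite Hb2 //; try lia.
congr (_ + _); apply: eq_bigr => j _.
rewrite H // HW2 //; lia.
Qed.

Lemma F4 l : (q.+1 <= l <= L)%N -> forall i, (i < m l)%N -> fD x l.+1 i = fS x l i.
Proof.
elim: l => [|l IH] Hl i Hi; first by lia.
rewrite !fwdE eqSS.
have -> : pD x l.+2 i = pS x l.+1 i.
  have [Heq|Hne] := eqVneq l q; first by subst l; exact: F3.
  apply: pre_step => //; first by lia.
  move=> j Hj; apply: IH => //; lia.
by [].
Qed.

Lemma pre_up l i : (q.+1 <= l <= L)%N -> (i < m l)%N -> pD x l.+1 i = pS x l i.
Proof.
move=> Hl Hi; have [Heq|Hne] := eqVneq l q.+1; first by subst l; exact: F3.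
case: l Hl Hne Hi => [|l] Hl Hne Hi; first by lia.
apply: pre_step => //; first by lia.
move=> j Hj; apply: F4 => //; lia.
Qed.

Lemma G1 l i : (0 < l <= q)%N -> (i < m l)%N -> gD x l i = gS x l i.
Proof.
move=> Hl Hi; rewrite /gact ifF; last by apply: nF; lia.
by rewrite ifF ?pre_low //; apply: nF; lia.
Qed.

Lemma G2 l i : (q.+1 <= l <= L)%N -> (i < m l)%N -> gD x l.+1 i = gS x l i.
Proof. by move=> Hl Hi; rewrite /gact eqSS pre_up. Qed.

Lemma G3 j : (j < mh)%N -> gD x q.+1 j = lam j.
Proof.
move=> Hj; rewrite /gact ifF; last by apply: nF; lia.
by case: (Haff _ Hj n).
Qed.

Lemma outE : out sigma (m L) L.+1 md th' x = out sigma (m L) L m th x.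
Proof. apply/matrixP => i j; rewrite !mxE F4 //; lia. Qed.

Lemma zrecS (L0 : nat) (m0 : nat -> nat) (t : netparam R) x0 y k i :
  zrec sigma sigma' dell L0 m0 t x0 y k.+1 i =
  \sum_(j < m0 (L0 - k)%N) Wt t (L0 - k)%N j i *
     (zrec sigma sigma' dell L0 m0 t x0 y k j * gact sigma sigma' L0 m0 t x0 (L0 - k)%N j).
Proof. by []. Qed.

Local Notation y := (ys n).
Local Notation zS := (zrec sigma sigma' dell L m th x y).
Local Notation zD := (zrec sigma sigma' dell L.+1 md th' x y).

Lemma B1 k : (k <= L - q.+1)%N -> forall i, (i < m (L - k))%N -> zD k i = zS k i.
Proof.
elim: k => [|k IH] Hk i Hi; first by rewrite /= outE.
rewrite !zrecS (_ : (L.+1 - k = (L - k).+1)%N); last by lia.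
rewrite mdge; last by lia.
apply: eq_bigr => j _.
rewrite IH //; last by lia.
rewrite G2 //; last by lia.
have Hi' : (i < m (L - k).-1)%N by rewrite (_ : ((L - k).-1 = L - k.+1)%N) //; lia.
by rewrite HW2 //; lia.
Qed.

Lemma B2 k0 : (k0 < mh)%N -> zD (L - q)%N k0 =
  \sum_(i < m q.+1) Wt th' q.+2 i k0 * (zS (L - q.+1)%N i * gS x q.+1 i).
Proof.
move=> Hk0; rewrite (_ : (L - q = (L - q.+1).+1)%N); last by lia.
rewrite zrecS (_ : (L.+1 - (L - q.+1) = q.+2)%N); last by lia.
rewrite mdge //; apply: eq_bigr => i _.
rewrite G2 //; last by lia.
rewrite B1 //; rewrite (_ : (L - (L - q.+1) = q.+1)%N) //; lia.
Qed.

Lemma B3d d : (d <= q)%N -> forall i, (i < m (q - d))%N ->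
  zD (L.+1 - (q - d))%N i = zS (L - (q - d))%N i.
Proof.
elim: d => [|d IH] Hd i Hi.
  rewrite subn0 in Hi *.
  rewrite (_ : (L.+1 - q = (L - q).+1)%N); last by lia.
  rewrite zrecS (_ : (L.+1 - (L - q) = q.+1)%N); last by lia.
  rewrite mdq1.
  rewrite (eq_bigr (fun k : 'I_mh => \sum_(j < m q.+1)
     (Wt th' q.+2 j k * lam k * Wt th' q.+1 k i) * (zS (L - q.+1)%N j * gS x q.+1 j))); last first.
    move=> k _; rewrite B2 // G3 // mulr_suml mulr_sumr; apply: eq_bigr => j _; ring.
  rewrite exchange_big /=.
  rewrite [in RHS](_ : (L - q = (L - q.+1).+1)%N); last by lia.
  rewrite zrecS (_ : (L - (L - q.+1) = q.+1)%N); last by lia.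
  apply: eq_bigr => j _.
  by rewrite -mulr_suml HW3.
have Hq' : (q - d.+1).+1 = (q - d)%N by lia.
rewrite (_ : (L.+1 - (q - d.+1) = (L - (q - d.+1)).+1)%N); last by lia.
rewrite zrecS (_ : (L.+1 - (L - (q - d.+1)) = (q - d.+1).+1)%N); last by lia.
rewrite [in RHS](_ : (L - (q - d.+1) = (L - (q - d)).+1)%N); last by lia.
rewrite zrecS (_ : (L - (L - (q - d)) = (q - d.+1).+1)%N); last by lia.
rewrite (_ : (L - (q - d.+1) = L.+1 - (q - d))%N); last by lia.
rewrite mdle; last by lia.
rewrite Hq'; apply: eq_bigr => j _.
rewrite IH //; last by lia.
rewrite G1 //; last by lia.
have Hi' : (i < m (q - d).-1)%N by rewrite (_ : ((q - d).-1 = q - d.+1)%N) //; lia.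
by rewrite HW1 //; lia.
Qed.

Lemma B3 l i : (l <= q)%N -> (i < m l)%N -> zD (L.+1 - l)%N i = zS (L - l)%N i.
Proof.
move=> Hl Hi; have := @B3d (q - l) (leq_subr _ _) i.
by rewrite subKn //; apply.
Qed.
End Fixn.

Lemma ES_ext (f g : 'I_N -> R) : (forall k, f k = g k) -> ES' f = ES' g.
Proof. by move=> H; rewrite /ES'; congr (_ * _); apply: eq_bigr => k _. Qed.


Lemma ES_add (f g : 'I_N -> R) : ES' (fun k => f k + g k) = ES' f + ES' g.
Proof. by rewrite /ES' big_split mulrDr. Qed.

Lemma ES_scale c (f : 'I_N -> R) : ES' (fun k => c * f k) = c * ES' f.
Proof. by rewrite /ES' -mulr_sumr; ring. Qed.

Lemma ES_lin n0 (c : 'I_n0 -> R) (h : 'I_n0 -> 'I_N -> R) :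
  ES' (fun k => \sum_(i < n0) c i * h i k) = \sum_(i < n0) c i * ES' (h i).
Proof.
rewrite /ES' exchange_big mulr_sumr; apply: eq_bigr => i _.
by rewrite -mulr_sumr; ring.
Qed.

Hypothesis Hcrit : critical sigma sigma' dell L m th xs ys.

Lemma deep_crit : critical sigma sigma' dell L.+1 md th' xs ys.
Proof.
move=> l Hl; rewrite /gradW /gradb /zb.
have [Hlq|Hlq] := leqP l q.
  rewrite mdle // mdle; last by lia.
  have [HcW Hcb] := Hcrit l ltac:(lia).
  split => [i j Hi Hj|i Hi].
    rewrite -(HcW i j Hi Hj) /gradW /zb; apply: ES_ext => k.
    by rewrite B3 ?G1 ?F1 //; lia.
  rewrite -(Hcb i Hi) /gradb /zb; apply: ES_ext => k.
  by rewrite B3 ?G1 //; lia.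
have [->|Hne] := eqVneq l q.+1.
  have [HcW Hcb] := Hcrit q.+1 ltac:(lia).
  rewrite mdq1 mdle // subSS.
  split => [i j Hi Hj|i Hi].
    rewrite (@ES_ext _ (fun k => \sum_(i0 < m q.+1) (Wt th' q.+2 i0 i * lam i) *
      (zrec sigma sigma' dell L m th (vget (xs k)) (ys k) (L - q.+1) i0 *
       gact sigma sigma' L m th (vget (xs k)) q.+1 i0 * fwd sigma L m th (vget (xs k)) q j))).
      rewrite ES_lin big1 // => i0 _.
      by have := HcW i0 j (ltn_ord i0) Hj; rewrite /gradW /zb => ->; rewrite mulr0.
    move=> k; rewrite B2 // G3 // F1 // !mulr_suml; apply: eq_bigr => i0 _; ring.
  rewrite (@ES_ext _ (fun k => \sum_(i0 < m q.+1) (Wt th' q.+2 i0 i * lam i) *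
      (zrec sigma sigma' dell L m th (vget (xs k)) (ys k) (L - q.+1) i0 *
       gact sigma sigma' L m th (vget (xs k)) q.+1 i0))).
    rewrite ES_lin big1 // => i0 _.
    by have := Hcb i0 (ltn_ord i0); rewrite /gradb /zb => ->; rewrite mulr0.
  move=> k; rewrite B2 // G3 // !mulr_suml; apply: eq_bigr => i0 _; ring.
have [->|Hne2] := eqVneq l q.+2.
  have [HcW Hcb] := Hcrit q.+1 ltac:(lia).
  rewrite mdge // mdq1 subSS.
  split => [i j Hi Hj|i Hi].
    rewrite (@ES_ext _ (fun k => \sum_(j0 < m q) (lam j * Wt th' q.+1 j j0) *
      (zrec sigma sigma' dell L m th (vget (xs k)) (ys k) (L - q.+1) i *
       gact sigma sigma' L m th (vget (xs k)) q.+1 i * fwd sigma L m th (vget (xs k)) q j0)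
      + (lam j * bs th' q.+1 j + mu j) *
      (zrec sigma sigma' dell L m th (vget (xs k)) (ys k) (L - q.+1) i *
       gact sigma sigma' L m th (vget (xs k)) q.+1 i))).
      rewrite ES_add ES_scale ES_lin big1.
        by have := Hcb i Hi; rewrite /gradb /zb => ->; rewrite mulr0 addr0.
      move=> j0 _.
      by have := HcW i j0 Hi (ltn_ord j0); rewrite /gradW /zb => ->; rewrite mulr0.
    move=> k; rewrite F2 // pDq1 G2 //; last by lia.
    have Hi' : (i < m (L - (L - q.+1)))%N by rewrite (_ : (L - (L - q.+1) = q.+1)%N) //; lia.
    rewrite B1 //; try lia.
    set Z := (zrec sigma sigma' dell L m th (vget (xs k)) (ys k) (L - q.+1)%N i * gact sigma sigma' L m th (vget (xs k)) q.+1 i).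
    rewrite [X in _ = X + _](eq_bigr (fun j0 : 'I_(m q) => Z * lam j * (Wt th' q.+1 j j0 * fwd sigma L m th (vget (xs k)) q j0))); last by move=> j0 _; rewrite /Z; ring.
    rewrite -mulr_sumr; ring.
  rewrite -(Hcb i Hi) /gradb /zb; apply: ES_ext => k.
  rewrite G2 //; last by lia.
  have Hi' : (i < m (L - (L - q.+1)))%N by rewrite (_ : (L - (L - q.+1) = q.+1)%N) //; lia.
  by rewrite B1 //; lia.
case: l Hl Hlq Hne Hne2 => [|[|l]] Hl Hlq Hne Hne2; try lia.
have [HcW Hcb] := Hcrit l.+1 ltac:(lia).
rewrite mdge; last by lia.
rewrite mdge; last by lia.
rewrite subSS.
split => [i j Hi Hj|i Hi].
  rewrite -(HcW i j Hi Hj) /gradW /zb; apply: ES_ext => k.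
  rewrite G2 //; last by lia.
  rewrite F4 //; last by lia.
  have Hi' : (i < m (L - (L - l.+1)))%N by rewrite (_ : (L - (L - l.+1) = l.+1)%N) //; lia.
  by rewrite B1 //; lia.
rewrite -(Hcb i Hi) /gradb /zb; apply: ES_ext => k.
rewrite G2 //; last by lia.
have Hi' : (i < m (L - (L - l.+1)))%N by rewrite (_ : (L - (L - l.+1) = l.+1)%N) //; lia.
  by rewrite B1 //; lia.
Qed.

End Proof.

Theorem proposition2 (R : realType) (Y : Type) (sigma sigma' : R -> R)
    (L : nat) (m : nat -> nat)
    (ell : 'cV[R]_(m L) -> Y -> R) (dell : 'cV[R]_(m L) -> Y -> 'cV[R]_(m L))
    (Hlin : exists a b lam mu : R, affine_subdomain sigma a b lam mu)
    (Hsig' : forall t : R, derivable sigma t 1 -> sigma' t = 'D_1 sigma t)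
    (Hell : forall (y : Y) (v : 'cV[R]_(m L)),
        differentiable (fun u => ell u y) v ->
        forall i, dell v y i 0 = 'D_(delta_mx i 0) (fun u => ell u y) v)
    (N : nat) (xs : 'I_N -> 'cV[R]_(m 0%N)) (ys : 'I_N -> Y)
    (q mh : nat) (Hq : (q < L)%N) (Hmh : (minn (m q) (m q.+1) <= mh)%N)
    (th_shal th'_deep : netparam R)
    (Hcrit : critical sigma sigma' dell L m th_shal xs ys)
    (Hlift : one_layer_lifting sigma L m q mh xs th_shal th'_deep) :
  critical sigma sigma' dell L.+1 (deep_widths m q mh) th'_deep xs ys.
Proof.
case: Hlift => H1 [H2 [lam [mu [Hii [HW3 Hb3]]]]].
apply: (@deep_crit R Y sigma sigma' L m dell N xs ys q mh th_shal th'_deep lam mu Hq) => //.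
- by move=> l i j Hl Hi Hj; rewrite (proj1 (H1 l Hl)).
- by move=> l i Hl Hi; rewrite (proj2 (H1 l Hl)).
- by move=> l i j Hl Hi Hj; rewrite (proj1 (H2 l Hl)).
- by move=> l i Hl Hi; rewrite (proj2 (H2 l Hl)).
- move=> j Hj k; have [a [b [Haf Hin]]] := Hii j Hj.
  split; last exact: (@aff_deriv _ _ _ _ _ _ _ _ Hsig' Haf (Hin k)).
  by case: Haf => _ [_ Hs]; apply: Hs; apply: Hin.
Qed.
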